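(* Let $\rho:\mathfrak{gl}_{n|n}\to\mathfrak{gl}(V)$ be an irreducible representation of the complex Lie superalgebra $\mathfrak{gl}_{n|n}$ on a finite-dimensional $\mathbb{Z}_2$-graded complex vector space $V=V_0\oplus V_1$ with $\dim V_0\ne\dim V_1$ (extend $\rho$ to the universal enveloping algebra). Then $\rho(I_\ell)=0$ for every $\ell\in\mathbb{N}$.
   Context: A standard basis of $\mathrm{End}(\mathbb{C}^{n|n})$ consists of $E^{\sigma\tau}_{ij}$ with $\sigma,\tau\in\{0,1\}$ and $i,j\in\{1,\dots,n\}$, of parity $\sigma+\tau\bmod 2$, satisfying $E^{\sigma\tau}_{ij}E^{\sigma'\tau'}_{i'j'}=\delta^{\tau\sigma'}\delta_{ji'}E^{\sigma\tau'}_{ij'}$ (here $\sigma=1$ labels the odd block $\mathbb{C}^n$ and $\sigma=0$ the even one). The Lie superalgebra bracket is the supercommutator. The degree-$\ell$ Casimir element of the universal enveloping algebra is $I_\ell=\sum E^{\sigma_1\sigma_2}_{j_1j_2}(-1)^{\sigma_2}E^{\sigma_2\sigma_3}_{j_2j_3}(-1)^{\sigma_3}\cdots E^{\sigma_{\ell-1}\sigma_\ell}_{j_{\ell-1}j_\ell}(-1)^{\sigma_\ell}E^{\sigma_\ell\sigma_1}_{j_\ell j_1}$, summed over all $\sigma_1,\dots,\sigma_\ell\in\{0,1\}$ and $j_1,\dots,j_\ell\in\{1,\dots,n\}$. A representation maps even elements to even operators and odd elements to odd operators and preserves brackets. *)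

(* Defs.v *)
(* Ground field: the complex numbers, realised as R[i]
   (mathcomp-real-closed's complex over a realType R, i.e. over the reals). *)
From HB Require Import structures.
From mathcomp Require Import all_boot all_order all_algebra.
From mathcomp Require Import reals complex.
Set Implicit Arguments. Unset Strict Implicit. Unset Printing Implicit Defensive.
Import Order.TTheory GRing.Theory Num.Theory.
Local Open Scope ring_scope.

Section Super.
Variable F : pzRingType.

(* A Z_2-graded space F^{p|q} has coordinates 'I_(p + q); the first p
   coordinates span the even part, the last q the odd part. *)
Definition spar {p q : nat} (k : 'I_(p + q)) : bool := (p <= k)%N.

(* Homogeneous endomorphisms of F^{p|q} of parity a (false = even). *)
Definition mx_homog {p q : nat} (a : bool) (A : 'M[F]_(p + q)) : Prop :=
  forall i j : 'I_(p + q), spar i (+) spar j != a -> A i j = 0.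

Definition sbracket {N : nat} (a b : bool) (A B : 'M[F]_N) : 'M[F]_N :=
  A *m B - (-1) ^+ (a && b) *: (B *m A).

Definition even_proj {p q : nat} : 'M[F]_(p + q) :=
  \matrix_(i, j) ((i == j) && ~~ spar i)%:R.
End Super.

(* Index of the basis vector (sigma, i) of C^{n|n}; sigma = true is odd. *)
Definition bidx (n : nat) (s : bool) (i : 'I_n) : 'I_(n + n) :=
  if s then rshift n i else lshift n i.

Definition Ebasis {F : pzRingType} (n : nat) (s t : bool) (i j : 'I_n)
  : 'M[F]_(n + n) := delta_mx (bidx s i) (bidx t j).

Definition is_super_rep {F : pzRingType} (n d0 d1 : nat)
  (rho : {linear 'M[F]_(n + n) -> 'M[F]_(d0 + d1)}) : Prop :=
  (forall a X, mx_homog a X -> mx_homog a (rho X)) /\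
  (forall a b X Y, mx_homog a X -> mx_homog b Y ->
     rho (sbracket a b X Y) = sbracket a b (rho X) (rho Y)).

(* Graded invariant subspaces (row spaces of W; vectors are rows, an operator
   A acts as v |-> A v, i.e. on rows by right multiplication by A^T). *)
Definition graded_invariant {F : fieldType} (n d0 d1 : nat)
  (rho : {linear 'M[F]_(n + n) -> 'M[F]_(d0 + d1)}) (W : 'M[F]_(d0 + d1)) :=
  (W *m @even_proj F d0 d1 <= W)%MS /\
  (forall X : 'M[F]_(n + n), (W *m (rho X)^T <= W)%MS).

Definition irreducible_rep {F : fieldType} (n d0 d1 : nat)
  (rho : {linear 'M[F]_(n + n) -> 'M[F]_(d0 + d1)}) : Prop :=
  (0 < d0 + d1)%N /\
  forall W, graded_invariant rho W -> \rank W = 0%N \/ \rank W = (d0 + d1)%N.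

(* rho(I_l), where rho is extended to U(gl_{n|n}) as an algebra map:
   I_l = sum_{sigma, j} E^{s1 s2}_{j1 j2} (-1)^{s2} E^{s2 s3}_{j2 j3} ...
         (-1)^{s_l} E^{s_l s1}_{j_l j1}.
   With 0-based indices k < l, the k-th factor is E^{s_k s_{k+1 mod l}}
   and the total sign is (-1)^(s_1 + ... + s_{l-1}) (all but the first). *)
Definition rho_casimir {F : pzRingType} (n N : nat)
  (rho : 'M[F]_(n + n) -> 'M[F]_N) (l : nat) : 'M[F]_N :=
  \sum_(s : {ffun 'I_l -> bool}) \sum_(j : {ffun 'I_l -> 'I_n})
    ((-1) ^+ (\sum_(k < l | (0 < k)%N) (s k : nat)) *:
      \big[mulmx/1%:M]_(k < l)
        rho (Ebasis (s k) (s (ordS k)) (j k) (j (ordS k)))).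

(* Main.v *)
Require Import Defs.
From HB Require Import structures.
From mathcomp Require Import all_boot all_order all_algebra.
From mathcomp Require Import reals complex.
From mathcomp Require Import ring zify.
Import GRing.Theory Num.Theory.
Local Open Scope ring_scope.
Set Implicit Arguments. Unset Strict Implicit. Unset Printing Implicit Defensive.

Section Ffun.
Variable T : finType.

Definition fcons k (x : T) (h : {ffun 'I_k -> T}) : {ffun 'I_k.+1 -> T} :=
  [ffun i => if unlift ord0 i is Some j then h j else x].
Definition ftail k (g : {ffun 'I_k.+1 -> T}) : {ffun 'I_k -> T} :=
  [ffun j => g (lift ord0 j)].

Lemma fcons0 k x (h : {ffun 'I_k -> T}) : fcons x h ord0 = x.
Proof. by rewrite ffunE unlift_none. Qed.
Lemma fconsS k x (h : {ffun 'I_k -> T}) i : fcons x h (lift ord0 i) = h i.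
Proof. by rewrite ffunE liftK. Qed.
Lemma fconsK k (g : {ffun 'I_k.+1 -> T}) : fcons (g ord0) (ftail g) = g.
Proof.
apply/ffunP => i; rewrite ffunE; case: unliftP => [j ->|->] //; by rewrite ffunE.
Qed.
Lemma ftailK k x (h : {ffun 'I_k -> T}) : ftail (fcons x h) = h.
Proof. by apply/ffunP => j; rewrite ffunE fconsS. Qed.

Lemma sum_ffunS (L : nmodType) k (G : {ffun 'I_k.+1 -> T} -> L) :
  \sum_g G g = \sum_x \sum_h G (fcons x h).
Proof.
rewrite pair_big /=.
rewrite (reindex (fun p : T * {ffun 'I_k -> T} => fcons p.1 p.2)) //.
apply: onW_bij; exists (fun g : {ffun 'I_k.+1 -> T} => (g ord0, ftail g)).
  by case=> x h /=; rewrite fcons0 ftailK.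
by move=> g /=; rewrite fconsK.
Qed.

Definition nx m (g : {ffun 'I_m -> T}) (c : T) (i : 'I_m) : T :=
  if insub (i.+1) is Some j then g j else c.

Lemma nx_lift m (g : {ffun 'I_m -> T}) x c (i : 'I_m) :
  nx (fcons x g) c (lift ord0 i) = nx g c i.
Proof.
rewrite /nx; case: insubP => [j Hj vj|Hj]; case: insubP => [j' Hj' vj'|Hj'] //=.
- have -> : j = lift ord0 j' by apply: val_inj; rewrite /= vj vj'.
  by rewrite fconsS.
- by move: Hj Hj'; rewrite /= /bump /=; lia.
- by move: Hj Hj'; rewrite /= /bump /=; lia.
Qed.

Lemma nx_ord0 m (g : {ffun 'I_m.+1 -> T}) x c : nx (fcons x g) c ord0 = g ord0.
Proof.
rewrite /nx; case: insubP => [j Hj vj|Hj] /=; last by move: Hj; rewrite /=; lia.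
have -> : j = lift ord0 ord0 by apply: val_inj; rewrite /= vj.
by rewrite fconsS.
Qed.

Lemma nx_base (g : {ffun 'I_0 -> T}) x c : nx (fcons x g) c ord0 = c.
Proof. by rewrite /nx; case: insubP => [j Hj vj|Hj] //=. Qed.

Lemma ordS_nx m (g : {ffun 'I_m.+1 -> T}) (i : 'I_m.+1) : g (ordS i) = nx g (g ord0) i.
Proof.
rewrite /nx; case: insubP => [j Hj vj|Hj]; congr (g _); apply: val_inj => /=.
  by rewrite vj modn_small.
have ei : i = m :> nat by move: (ltn_ord i) Hj; rewrite /= !ltnS; lia.
by rewrite ei modnn.
Qed.
End Ffun.

Section Gen.
Variable F : fieldType.

Definition sg (b : bool) : F := (-1) ^+ b.
Definition dl {T : eqType} (x y : T) : F := (x == y)%:R.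

Lemma sgD b c : sg (b (+) c) = sg b * sg c. Proof. by rewrite /sg signr_addb. Qed.
Lemma sg2 b : sg b * sg b = 1. Proof. by case: b; rewrite /sg ?expr0 ?expr1 ?mulr1 ?mulrNN ?mulr1. Qed.

Lemma sum_dl (T : finType) (L : lmodType F) (t0 : T) (G : T -> L) :
  \sum_x dl x t0 *: G x = G t0.
Proof.
rewrite (bigD1 t0) //= big1 => [|x /negbTE hx]; first by rewrite /dl eqxx scale1r addr0.
by rewrite /dl hx scale0r.
Qed.

Lemma sum_dlr (T : finType) (L : lmodType F) (t0 : T) (G : T -> L) :
  \sum_x dl t0 x *: G x = G t0.
Proof.
rewrite (bigD1 t0) //= big1 => [|x /negbTE hx]; first by rewrite /dl eqxx scale1r addr0.
by rewrite /dl eq_sym hx scale0r.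
Qed.

Definition scom {N : nat} (p q : bool) (A B : 'M[F]_N) := A *m B - sg (p && q) *: (B *m A).

Section Hom.
Variables p q : nat.
Local Notation hom := (@mx_homog F p q).

Lemma hom0 b : hom b 0. Proof. by move=> i j _; rewrite mxE. Qed.
Lemma homD b A B : hom b A -> hom b B -> hom b (A + B).
Proof. by move=> hA hB i j h; rewrite mxE hA // hB // addr0. Qed.
Lemma homZ b c A : hom b A -> hom b (c *: A).
Proof. by move=> hA i j h; rewrite mxE hA // mulr0. Qed.
Lemma hom_sum b (J : finType) (G : J -> 'M[F]_(p+q)) :
  (forall x, hom b (G x)) -> hom b (\sum_x G x).
Proof. move=> hG i j h; rewrite summxE big1 // => x _; exact: hG. Qed.
Lemma homM b c A B : hom b A -> hom c B -> hom (b (+) c) (A *m B).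
Proof.
move=> hA hB i j h; rewrite mxE big1 // => k _.
case: (boolP (spar i (+) spar k == b)) => [/eqP ik|ik]; last by rewrite hA ?mul0r.
rewrite hB ?mulr0 //; apply: contra h => /eqP <-; rewrite -ik.
by case: (spar i); case: (spar k); case: (spar j).
Qed.

Lemma hom_delta (a b : 'I_(p+q)) : hom (spar a (+) spar b) (delta_mx a b).
Proof.
move=> i j h; rewrite mxE; case: (eqVneq i a) h => [->|] //=.
by case: (eqVneq j b) => [->|] //=; rewrite eqxx.
Qed.

Lemma even_comm A : hom false A -> A *m even_proj F = even_proj F *m A.
Proof.
move=> hA; apply/matrixP => i j; rewrite !mxE.
rewrite (bigD1 j) //= big1 => [|k /negbTE kj]; last by rewrite mxE kj mulr0.
rewrite (bigD1 i) //= [X in _ = _ + X]big1 => [|k /negbTE ki]; last by rewrite mxE eq_sym ki mul0r.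
rewrite !mxE !eqxx !addr0 /=.
case si: (spar i); case sj: (spar j) => /=; rewrite ?mulr0 ?mul0r ?mulr1 ?mul1r //;
  by rewrite hA ?si ?sj.
Qed.

Definition str (A : 'M[F]_(p+q)) : F := \sum_i sg (spar i) * A i i.

Lemma strD A B : str (A + B) = str A + str B.
Proof. by rewrite /str -big_split; apply: eq_bigr => i _; rewrite mxE mulrDr. Qed.
Lemma strZ c A : str (c *: A) = c * str A.
Proof. by rewrite /str mulr_sumr; apply: eq_bigr => i _; rewrite mxE mulrCA. Qed.
Lemma strB A B : str (A - B) = str A - str B.
Proof. by rewrite -scaleN1r strD strZ mulN1r. Qed.
Lemma str_sum (J : finType) (G : J -> 'M[F]_(p+q)) : str (\sum_x G x) = \sum_x str (G x).
Proof.
rewrite /str exchange_big; apply: eq_bigr => i _; rewrite summxE mulr_sumr.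
by apply: eq_bigr.
Qed.

Lemma str_mulC b c A B : hom b A -> hom c B -> str (A *m B) = sg (b && c) * str (B *m A).
Proof.
move=> hA hB; rewrite /str mulr_sumr; under eq_bigr do rewrite mxE mulr_sumr.
under [RHS]eq_bigr do rewrite mxE !mulr_sumr.
rewrite [RHS]exchange_big; apply: eq_bigr => i _; apply: eq_bigr => j _.
case: (boolP (spar i (+) spar j == b)) => [/eqP hb|hb]; last by rewrite hA ?mul0r ?mulr0.
case: (boolP (spar j (+) spar i == c)) => [/eqP hc|hc]; last by rewrite hB ?mul0r ?mulr0.
rewrite -hb -hc /sg; case: (spar i); case: (spar j) => /=; ring.
Qed.

Lemma str_scom b c A B : hom b A -> hom c B -> str (scom b c A B) = 0.
Proof.
move=> hA hB; rewrite /scom strB strZ (str_mulC hA hB); exact: subrr.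
Qed.

Lemma str_scalar (x : F) : str (x%:M) = x * (p%:R - q%:R).
Proof.
rewrite /str big_split_ord /=.
rewrite (eq_bigr (fun _ => x)) => [|i _]; last first.
  by rewrite mxE eqxx /spar /= leqNgt ltn_ord /sg expr0 mul1r mulr1n.
rewrite [X in _ + X](eq_bigr (fun _ => - x)) => [|i _]; last first.
  by rewrite mxE eqxx /spar /= leq_addr /sg expr1 mulN1r mulr1n.
rewrite sumrN !sumr_const !card_ord mulrBr; congr (_ - _); by rewrite mulr_natr.
Qed.
End Hom.

Lemma scom_sum {N : nat} p q (A : 'M[F]_N) (J : finType) (G : J -> 'M[F]_N) :
  scom p q A (\sum_x G x) = \sum_x scom p q A (G x).
Proof. by rewrite /scom mulmx_sumr mulmx_suml scaler_sumr -sumrB. Qed.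

Lemma scom_Z {N : nat} p q (A B : 'M[F]_N) c : scom p q A (c *: B) = c *: scom p q A B.
Proof. by rewrite /scom scalerBr -scalemxAr -scalemxAl !scalerA mulrC. Qed.

Lemma scom_mul {N : nat} p q1 q2 (A B C : 'M[F]_N) :
  scom p (q1 (+) q2) A (B *m C) = scom p q1 A B *m C + sg (p && q1) *: (B *m scom p q2 A C).
Proof.
rewrite /scom mulmxBl mulmxBr -!scalemxAl -!scalemxAr !mulmxA scalerBr scalerA -sgD.
rewrite -andb_addr; set u := _ *m C; set v := B *m A *m C.
by rewrite addrA subrK.
Qed.

Section Rep.
Variables n d0 d1 : nat.
Variable rho : {linear 'M[F]_(n + n) -> 'M[F]_(d0 + d1)}.
Hypothesis Hrep : is_super_rep rho.
Local Notation I := 'I_(n + n).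
Local Notation par := (@spar n n).
Local Notation homV := (@mx_homog F d0 d1).

Definition R (a b : I) := rho (delta_mx a b).

Lemma R_hom a b : homV (par a (+) par b) (R a b).
Proof. exact: (proj1 Hrep _ _ (@hom_delta n n a b)). Qed.

Lemma R_rel a b c d :
  scom (par a (+) par b) (par c (+) par d) (R a b) (R c d)
  = dl b c *: R a d - sg ((par a (+) par b) && (par c (+) par d)) *: (dl d a *: R c b).
Proof.
have := proj2 Hrep _ _ _ _ (@hom_delta n n a b) (@hom_delta n n c d); rewrite /sbracket /scom /sg /R => <-.
rewrite !mul_delta_mx_cond linearB linearZ /= !raddfMn /=.
by rewrite /dl; case: (b == c); case: (d == a); rewrite /= ?mulr1n ?mulr0n ?scale1r ?scale0r ?scaler0 ?addr0 ?oppr0 ?subr0 ?add0r; try reflexivity; by rewrite ?addr0 ?add0r.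
Qed.

Fixpoint P (k : nat) (a c : I) : 'M[F]_(d0 + d1) :=
  if k is k'.+1 then \sum_b sg (par b) *: (R a b *m P k' b c) else R a c.

Lemma P_hom k a c : homV (par a (+) par c) (P k a c).
Proof.
elim: k a c => [|k IH] a c /=; first exact: R_hom.
apply: hom_sum => b; apply: homZ.
have := homM (@R_hom a b) (@IH b c).
by have -> : par a (+) par b (+) (par b (+) par c) = par a (+) par c
  by case: (par a); case: (par b); case: (par c).
Qed.

Lemma P_tensor k a b c d :
  scom (par a (+) par b) (par c (+) par d) (R a b) (P k c d)
  = dl b c *: P k a d - sg ((par a (+) par b) && (par c (+) par d)) *: (dl d a *: P k c b).
Proof.
elim: k a b c d => [|k IH] a b c d; first exact: R_rel.
set p := par a (+) par b.
rewrite /= scom_sum.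
have E : forall x, scom p (par c (+) par d) (R a b) (sg (par x) *: (R c x *m P k x d)) =
  dl b c *: (sg (par x) *: (R a x *m P k x d))
  - dl x a *: ((sg (par x) * sg (p && (par c (+) par x))) *: (R c b *m P k x d))
  + dl b x *: ((sg (par x) * sg (p && (par c (+) par x))) *: (R c x *m P k a d))
  - dl d a *: ((sg (par x) * sg (p && (par c (+) par d))) *: (R c x *m P k x b)).
{ move=> x; rewrite scom_Z.
  have H12 : sg (p && (par c (+) par x)) * sg (p && (par x (+) par d)) = sg (p && (par c (+) par d)).
    rewrite -sgD -andb_addr; congr (sg (_ && _)).
    by case: (par c); case: (par x); case: (par d).
  rewrite {1}(_ : par c (+) par d = (par c (+) par x) (+) (par x (+) par d)); last first.
    by case: (par c); case: (par x); case: (par d).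
  rewrite scom_mul R_rel IH -/p.
  rewrite mulmxBl mulmxBr -!scalemxAl -!scalemxAr !scalerDr !scalerN !scalerA !addrA.
  rewrite -H12.
  congr (_ - _ + _ - _); congr (_ *: _); ring. }
rewrite (eq_bigr _ (fun x _ => E x)).
rewrite sumrB big_split sumrB /= -scaler_sumr.
rewrite (sum_dl a (fun i => (sg (par i) * sg (p && (par c (+) par i))) *: (R c b *m P k i d))).
rewrite (sum_dlr b (fun i => (sg (par i) * sg (p && (par c (+) par i))) *: (R c i *m P k a d))).
rewrite -scaler_sumr.
have -> : (sg (par a) * sg (p && (par c (+) par a))) = (sg (par b) * sg (p && (par c (+) par b))).
  by rewrite /p /sg; case: (par a); case: (par b); case: (par c) => /=; ring.
rewrite subrK; congr (_ - _).
rewrite scalerA mulrC -scalerA; congr (_ *: _).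
rewrite scaler_sumr; apply: eq_bigr => x _; by rewrite scalerA mulrC.
Qed.

Definition Cas k := \sum_a P k a a.

Lemma Cas_hom k : homV false (Cas k).
Proof.
apply: hom_sum => a; have := @P_hom k a a; by rewrite addbb.
Qed.

Lemma Cas_commR k a b : R a b *m Cas k = Cas k *m R a b.
Proof.
apply/eqP; rewrite -subr_eq0; apply/eqP.
have : \sum_c scom (par a (+) par b) (par c (+) par c) (R a b) (P k c c) = 0.
  rewrite (eq_bigr _ (fun c _ => P_tensor k a b c c)) sumrB.
  rewrite (sum_dlr b (fun c => P k a c)).
  under eq_bigr do rewrite addbb andbF /sg expr0 scale1r.
  by rewrite (sum_dl a (fun c => P k c b)) subrr.
under eq_bigr do rewrite addbb.
rewrite -scom_sum /scom andbF /sg expr0 scale1r.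
by rewrite /Cas mulmx_sumr mulmx_suml.
Qed.

Lemma rho_delta X : rho X = \sum_i \sum_j X i j *: R i j.
Proof.
rewrite {1}(matrix_sum_delta X) linear_sum; apply: eq_bigr => i _.
rewrite linear_sum; apply: eq_bigr => j _; by rewrite linearZ.
Qed.

Lemma Cas_comm k X : rho X *m Cas k = Cas k *m rho X.
Proof.
rewrite rho_delta mulmx_suml mulmx_sumr; apply: eq_bigr => i _.
rewrite mulmx_suml mulmx_sumr; apply: eq_bigr => j _.
by rewrite -scalemxAl -scalemxAr Cas_commR.
Qed.

Lemma str_P k a b : str (P k a a) = sg (par a (+) par b) * str (P k b b).
Proof.
have := str_scom (@R_hom a b) (@P_hom k b a).
rewrite P_tensor /dl !eqxx /= !mulr1n !scale1r strB !strZ.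
rewrite (addbC (par b)) andbb => /eqP; rewrite subr_eq0 => /eqP.
by [].
Qed.

Lemma str_Cas k : str (Cas k) = 0.
Proof.
rewrite /Cas str_sum.
case: (pickP (@predT I)) => [b0 _|h]; last by rewrite big_pred0.
rewrite (eq_bigr _ (fun a _ => str_P k a b0)).
under eq_bigr do rewrite sgD -mulrA.
rewrite -mulr_suml.
have -> : \sum_(a < n + n) sg (par a) = 0.
  transitivity (str (1%:M : 'M[F]_(n + n))); last by rewrite str_scalar subrr mulr0.
  by apply: eq_bigr => i _; rewrite mxE eqxx mulr1.
by rewrite mul0r.
Qed.

Lemma hom_tr b (A : 'M[F]_(d0 + d1)) : homV b A -> homV b A^T.
Proof. by move=> hA i j h; rewrite mxE hA // addbC. Qed.

Lemma hom_scalar (c : F) : homV false (c%:M : 'M[F]_(d0 + d1)).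
Proof.
move=> i j h; rewrite mxE; case: (eqVneq i j) h => [->|] //.
by rewrite addbb.
Qed.

Lemma schur (C : 'M[F]_(d0 + d1)) (c : F) (v : 'rV[F]_(d0 + d1)) :
  homV false C -> (forall X, rho X *m C = C *m rho X) -> irreducible_rep rho ->
  v *m C^T = c *: v -> v != 0 -> C = c%:M.
Proof.
move=> hC hcomm [_ irr] hv vnz.
set D := C^T - c%:M.
have hD : homV false D.
  rewrite /D -scaleN1r -(addbb false); apply: homD; first exact: hom_tr.
  by rewrite -(addbb false) -[false]/(false (+) false); apply: homZ; exact: hom_scalar.
have Dcomm : forall X, (rho X)^T *m D = D *m (rho X)^T.
  move=> X; rewrite /D mulmxBr mulmxBl -!trmx_mul hcomm; congr (_ - _).
  by rewrite scalar_mxC.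
have Winv : graded_invariant rho (kermx D).
  split.
    apply/sub_kermxP; rewrite -mulmxA -even_comm // mulmxA mulmx_ker mul0mx //.
  move=> X; apply/sub_kermxP; by rewrite -mulmxA Dcomm mulmxA mulmx_ker mul0mx.
have vW : (v <= kermx D)%MS.
  apply/sub_kermxP; by rewrite /D mulmxBr hv mul_mx_scalar subrr.
case: (irr _ Winv) => hr.
  move: hr => /eqP; rewrite mxrank_eq0 => /eqP W0.
  by move: vW; rewrite W0 submx0 (negbTE vnz).
have : \rank D = 0%N.
  move: hr; rewrite mxrank_ker; have := rank_leq_row D; lia.
move/eqP; rewrite mxrank_eq0 /D subr_eq0 => /eqP hCt.
by rewrite -[C]trmxK hCt tr_scalar_mx.
Qed.

Definition O k (a : I) (h : {ffun 'I_k -> I}) (c : I) : 'M[F]_(d0 + d1) :=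
  (-1) ^+ (\sum_(i < k) (par (h i) : nat)) *:
  \big[mulmx/1%:M]_(i < k.+1) R (fcons a h i) (nx (fcons a h) c i).

Lemma O_S k a b (h : {ffun 'I_k -> I}) c :
  O a (fcons b h) c = sg (par b) *: (R a b *m O b h c).
Proof.
rewrite /O [X in (-1) ^+ X]big_ord_recl [X in _ *: X]big_ord_recl fcons0 nx_ord0 !fcons0.
under eq_bigr do rewrite fconsS.
rewrite exprD -scalemxAr scalerA; congr (_ *: (_ *m _)).
by apply: eq_bigr => i _; rewrite fconsS nx_lift.
Qed.

Lemma P_O k a c : P k a c = \sum_(h : {ffun 'I_k -> I}) O a h c.
Proof.
elim: k a c => [|k IH] a c.
  rewrite /= (eq_bigr (fun _ => R a c)) => [|h _]; last first.
    by rewrite /O big_ord0 expr0 scale1r big_ord_recl big_ord0 mulmx1 fcons0 nx_base.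
  by rewrite sumr_const card_ffun !card_ord expn0.
rewrite /= sum_ffunS; apply: eq_bigr => b _.
rewrite IH mulmx_sumr scaler_sumr; apply: eq_bigr => h _; by rewrite O_S.
Qed.

Definition T k (g : {ffun 'I_k.+1 -> I}) : 'M[F]_(d0 + d1) :=
  (-1) ^+ (\sum_(i < k.+1 | (0 < i)%N) (par (g i) : nat)) *:
  \big[mulmx/1%:M]_(i < k.+1) R (g i) (g (ordS i)).

Lemma T_fcons k a (h : {ffun 'I_k -> I}) : T (fcons a h) = O a h a.
Proof.
rewrite /T /O big_mkcond [X in (-1) ^+ X]big_ord_recl /= add0n.
congr (_ ^+ _ *: _).
  by apply: eq_bigr => i _; rewrite fconsS.
by apply: eq_bigr => i _; rewrite ordS_nx fcons0.
Qed.

Definition idx (x : I) : 'I_n := match split x with inl i => i | inr i => i end.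

Lemma par_bidx s i : par (bidx s i) = s.
Proof. case: s => /=; rewrite /spar /=; [exact: leq_addr | by rewrite leqNgt ltn_ord]. Qed.

Lemma idx_bidx s i : idx (bidx s i) = i.
Proof. by case: s; rewrite /idx /= -?/(unsplit (inl i)) -?/(unsplit (inr i)) unsplitK. Qed.

Lemma bidx_par_idx x : bidx (par x) (idx x) = x.
Proof.
rewrite -[x]splitK /idx unsplitK; case: (split x) => i.
  by rewrite (par_bidx false i).
by rewrite (par_bidx true i).
Qed.

Lemma casimir_T k : rho_casimir rho k.+1 = \sum_(g : {ffun 'I_k.+1 -> I}) T g.
Proof.
rewrite /rho_casimir pair_big /=; symmetry.
rewrite (reindex (fun p : {ffun 'I_k.+1 -> bool} * {ffun 'I_k.+1 -> 'I_n} =>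
   [ffun i => bidx (p.1 i) (p.2 i)])) /=; last first.
  apply: onW_bij.
  exists (fun g : {ffun 'I_k.+1 -> I} => ([ffun i => par (g i)], [ffun i => idx (g i)])).
    case=> s j /=; congr (_, _); apply/ffunP => i; by rewrite !ffunE ?par_bidx ?idx_bidx.
  by move=> g; apply/ffunP => i; rewrite !ffunE bidx_par_idx.
apply: eq_bigr => [[s j]] _ /=; rewrite /T; congr (_ ^+ _ *: _).
  by apply: eq_bigr => i _; rewrite ffunE par_bidx.
by apply: eq_bigr => i _; rewrite /R !ffunE.
Qed.

Lemma casimir_Cas k : rho_casimir rho k.+1 = Cas k.
Proof.
rewrite casimir_T sum_ffunS /Cas; apply: eq_bigr => a _.
rewrite P_O; apply: eq_bigr => h _; exact: T_fcons.
Qed.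

End Rep.
End Gen.

Unset Implicit Arguments.
Local Open Scope complex_scope.

Theorem mainTheorem7 (R : realType) (n d0 d1 : nat)
  (rho : {linear 'M[R[i]]_(n + n) -> 'M[R[i]]_(d0 + d1)}) :
  is_super_rep rho -> irreducible_rep rho -> d0 <> d1 ->
  forall l : nat, (0 < l)%N -> rho_casimir rho l = 0.
Proof.
move=> Hrep Hirr Hd [//|k] _.
rewrite casimir_Cas.
have [c /eigenvalueP [v hv vnz]] := eigenvalue_closed ((Cas rho k)^T) (proj1 Hirr).
have HC := schur (Cas_hom Hrep k) (Cas_comm Hrep k) Hirr hv vnz.
have := str_Cas Hrep k.
rewrite HC str_scalar => /eqP; rewrite mulf_eq0 subr_eq0 eqr_nat => /orP [/eqP c0|/eqP dd]; last by [].
by rewrite c0; apply/matrixP => i j; rewrite !mxE mul0rn.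
Qed.
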